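(* Let $\ell\ge1$ be an integer and $p$ an integer with $-1\le p\le \ell-1$. Then, as an identity of meromorphic functions of $x$, $$\Delta^\ell\left[\binom{x+p}{\ell}\psi(x)\right] = H_\ell+\psi(x+p+1),$$ where $\Delta g(x)=g(x+1)-g(x)$ is the forward difference operator.
   Context: $\psi=\Gamma'/\Gamma$ is the digamma function, $H_\ell=1+\frac12+\cdots+\frac1\ell$ the harmonic number, and $\binom{x}{n}=\frac{x(x-1)\cdots(x-n+1)}{n!}$ the generalized binomial coefficient. *)

(* Defs.v *)
From Stdlib Require Import Reals ZArith.
From Coquelicot Require Import Coquelicot.
Open Scope C_scope.

Fixpoint harmonic (n : nat) : R :=
  match n with
  | O => 0%R
  | S m => (harmonic m + / INR (S m))%R
  end.

Definition euler_gamma : R :=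
  real (Lim_seq (fun n => harmonic n - ln (INR n)))%R.

(** Digamma psi = Gamma'/Gamma, via its classical series expansion
    psi(z) = -gamma + sum_{n>=0} (1/(n+1) - 1/(n+z)),
    valid for z not in {0,-1,-2,...}. *)
Definition digamma_term (z : C) (n : nat) : C :=
  / RtoC (INR n + 1) - / (z + RtoC (INR n)).

Definition digamma (z : C) : C :=
  RtoC (- euler_gamma) +
  (Series (fun n => Re (digamma_term z n)), Series (fun n => Im (digamma_term z n))).

Fixpoint falling (x : C) (n : nat) : C :=
  match n with
  | O => 1
  | S m => falling x m * (x - RtoC (INR m))
  end.

Definition gbinom (x : C) (n : nat) : C := falling x n / RtoC (INR (fact n)).

Definition fdiff (g : C -> C) : C -> C := fun x => g (x + 1) - g x.

Fixpoint fdiff_iter (l : nat) (g : C -> C) : C -> C :=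
  match l with
  | O => g
  | S m => fdiff (fdiff_iter m g)
  end.

Definition nonpos_int (z : C) : Prop := exists n : nat, z = RtoC (- INR n).

(* Main.v *)
Require Import Defs.
From Stdlib Require Import Reals ZArith Lra Lia FunctionalExtensionality.
From Coquelicot Require Import Coquelicot.
Open Scope C_scope.

Ltac Ceq := apply injective_projections; simpl; try field; try ring.

Lemma telescope (u : nat -> R) : is_lim_seq u 0%R ->
  is_series (fun n => u n - u (S n))%R (u 0%nat).
Proof.
  intros H. unfold is_series.
  assert (E: forall n, sum_n (fun n => u n - u (S n))%R n = (u 0%nat - u (S n))%R).
  { induction n. rewrite sum_O. reflexivity.
    rewrite sum_Sn, IHn. unfold plus; simpl. ring. }
  assert (L: is_lim_seq (fun n => u 0%nat - u (S n))%R (u 0%nat - 0)%R).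
  { apply (is_lim_seq_minus' (fun _ => u 0%nat) (fun n => u (S n))).
    apply is_lim_seq_const. now apply (is_lim_seq_incr_1 u). }
  rewrite Rminus_0_r in L.
  apply (is_lim_seq_ext _ (sum_n (fun n => u n - u (S n))%R)) in L.
  exact L. intros; now rewrite E.
Qed.

Lemma lim_inv_S : is_lim_seq (fun n => / (INR n + 1))%R 0%R.
Proof.
  replace (Finite 0) with (Rbar_inv p_infty) by reflexivity.
  apply is_lim_seq_inv. 2: discriminate.
  apply (is_lim_seq_ext (fun n => INR (S n))). intros; apply S_INR.
  apply (is_lim_seq_incr_1 INR). apply is_lim_seq_INR.
Qed.

Lemma ex_tele : ex_series (fun k => / (INR k + 1) - / (INR (S k) + 1))%R.
Proof.
  eexists. apply (telescope (fun k => / (INR k + 1))%R). apply lim_inv_S.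
Qed.

Lemma RtoC_neq (r : R) : r <> 0%R -> RtoC r <> 0.
Proof. intros H E. apply H. injection E. auto. Qed.

Lemma term_eq (z : C) (n : nat) : z + RtoC (INR n) <> 0 ->
  digamma_term z n = (z - 1) / (RtoC (INR n + 1) * (z + RtoC (INR n))).
Proof.
  intros H. unfold digamma_term.
  assert (H1 : RtoC (INR n + 1) <> 0) by (apply RtoC_neq; pose proof (pos_INR n); lra).
  rewrite RtoC_plus. rewrite RtoC_plus in H1. field. split; auto.
Qed.

Lemma Cmod_lower (z : C) (n : nat) : (INR n - Cmod z <= Cmod (z + RtoC (INR n)))%R.
Proof.
  pose proof (Cmod_triangle (z + RtoC (INR n)) (- z)) as T.
  replace (z + RtoC (INR n) + - z) with (RtoC (INR n)) in T by ring.
  rewrite Cmod_R, Cmod_opp, Rabs_pos_eq in T by apply pos_INR. lra.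
Qed.

Lemma ex_cmod (z : C) : (forall n, z + RtoC (INR n) <> 0) ->
  ex_series (fun n => Cmod (digamma_term z n)).
Proof.
  intros Hz.
  destruct (INR_unbounded (2 * Cmod z + 2)) as [N HN].
  apply (ex_series_incr_n _ N).
  apply (@ex_series_le R_AbsRing R_CompleteNormedModule _ (fun k => 2 * Cmod (z - 1) * (/ (INR k + 1) - / (INR (S k) + 1)))%R).
  2: { apply (ex_series_scal (2 * Cmod (z - 1))%R _ ex_tele). }
  intros k. rewrite term_eq by auto.
  assert (Hn : (Cmod (z + RtoC (INR (N + k))) >= INR (N+k) - Cmod z)%R) by (apply Rle_ge, Cmod_lower).
  rewrite plus_INR in Hn |- *. rewrite S_INR.
  pose proof (Cmod_ge_0 z). pose proof (pos_INR k). pose proof (Cmod_ge_0 (z-1)).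
  assert (Hnz := Hz (N+k)%nat). rewrite plus_INR in Hnz.
  rewrite Cmod_div.
  2:{ apply Cmult_neq_0; auto. apply RtoC_neq. pose proof (pos_INR N); lra. }
  rewrite Cmod_mult, Cmod_R.
  set (D := Cmod (z + RtoC (INR N + INR k))) in *.
  set (A := Cmod (z - 1)) in *.
  assert (HD : (D >= (INR k + 2) / 2)%R) by lra.
  unfold norm; simpl. unfold abs; simpl.
  rewrite Rabs_pos_eq.
  2: { apply Rmult_le_pos; auto. apply Rlt_le, Rinv_0_lt_compat.
       rewrite Rabs_pos_eq by lra. apply Rmult_lt_0_compat; lra. }
  rewrite Rabs_pos_eq by lra.
  replace (/ (INR k + 1) - / (INR k + 1 + 1))%R with (/ ((INR k + 1) * (INR k + 2)))%R by (field; lra).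
  unfold Rdiv.
  replace (2 * A * / ((INR k + 1) * (INR k + 2)))%R with (A * / ((INR k + 1) * ((INR k + 2)/2)))%R by (field; lra).
  apply Rmult_le_compat_l; auto.
  apply Rinv_le_contravar. apply Rmult_lt_0_compat; lra.
  apply Rmult_le_compat; lra.
Qed.

Lemma im_le_Cmod (c : C) : (Rabs (Im c) <= Cmod c)%R.
Proof.
  destruct c as [a b]. unfold Cmod, Im; simpl.
  rewrite <- sqrt_Rsqr_abs. apply sqrt_le_1_alt. unfold Rsqr.
  pose proof (Rle_0_sqr a). unfold Rsqr in *. nra.
Qed.

Lemma ex_re (z : C) : (forall n, z + RtoC (INR n) <> 0) ->
  ex_series (fun n => Re (digamma_term z n)).
Proof.
  intros Hz. refine (@ex_series_le R_AbsRing R_CompleteNormedModule _ _ _ (ex_cmod z Hz)).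
  intros n. apply re_le_Cmod.
Qed.

Lemma ex_im (z : C) : (forall n, z + RtoC (INR n) <> 0) ->
  ex_series (fun n => Im (digamma_term z n)).
Proof.
  intros Hz. refine (@ex_series_le R_AbsRing R_CompleteNormedModule _ _ _ (ex_cmod z Hz)).
  intros n. apply im_le_Cmod.
Qed.

Lemma nz_of_nonpos (z : C) : ~ nonpos_int z -> forall n, z + RtoC (INR n) <> 0.
Proof.
  intros H n E. apply H. exists n.
  replace z with (z + RtoC (INR n) - RtoC (INR n)) by ring. rewrite E.
  Ceq.
Qed.

Lemma inv_RtoC_re (r : R) : r <> 0%R -> Re (/ RtoC r) = (/ r)%R.
Proof. intros H. simpl. field. auto. Qed.

Lemma diff_term (z : C) (n : nat) :
  digamma_term (z + 1) n - digamma_term z n =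
  / (z + RtoC (INR n)) - / (z + RtoC (INR (S n))).
Proof.
  unfold digamma_term. rewrite S_INR, RtoC_plus. ring_simplify.
  replace (z + 1 + RtoC (INR n)) with (z + (RtoC (INR n) + 1)) by ring. ring.
Qed.

Lemma digamma_succ (z : C) : ~ nonpos_int z -> digamma (z + 1) = digamma z + / z.
Proof.
  intros H. pose proof (nz_of_nonpos z H) as Hz.
  assert (Hz1 : forall n, z + 1 + RtoC (INR n) <> 0).
  { intros n. replace (z + 1 + RtoC (INR n)) with (z + RtoC (INR (S n))). apply Hz.
    rewrite S_INR, RtoC_plus. ring. }
  set (w := fun n => / (z + RtoC (INR n))).
  assert (Lre : is_lim_seq (fun n => Re (w n)) 0%R).
  { apply (is_lim_seq_ext (fun n => / (INR n + 1) - Re (digamma_term z n))%R).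
    intros n. unfold digamma_term, w. change (Re (?a - ?b)) with (Re a - Re b)%R.
    rewrite inv_RtoC_re. ring. pose proof (pos_INR n); lra.
    replace 0%R with (0 - 0)%R by ring. apply is_lim_seq_minus'.
    apply lim_inv_S. apply ex_series_lim_0, ex_re, Hz. }
  assert (Lim : is_lim_seq (fun n => Im (w n)) 0%R).
  { apply (is_lim_seq_ext (fun n => - Im (digamma_term z n))%R).
    intros n. unfold digamma_term, w. change (Im (?a - ?b)) with (Im a - Im b)%R.
    simpl. unfold Rdiv. ring.
    pose proof (proj1 (is_lim_seq_opp _ _) (ex_series_lim_0 _ (ex_im z Hz))) as L. replace (Rbar_opp 0) with (Finite 0) in L by (simpl; f_equal; ring). exact L. }
  assert (Sre : (Series (fun n => Re (digamma_term (z + 1) n)) =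
                 Series (fun n => Re (digamma_term z n)) + Re (/ z))%R).
  { apply (Rplus_eq_reg_r (- Series (fun n => Re (digamma_term z n)))).
    ring_simplify.
    rewrite <- Series_minus by (apply ex_re; auto).
    erewrite Series_ext. 2:{ intros n. change (Re ?a - Re ?b)%R with (Re (a - b)).
      rewrite diff_term. change (Re (?a - ?b)) with (Re a - Re b)%R. reflexivity. }
    apply is_series_unique. replace (Re (/ z)) with (Re (w 0%nat)).
    apply (telescope (fun n => Re (w n))). auto.
    unfold w. simpl (INR 0). f_equal. f_equal. Ceq. }
  assert (Sim : (Series (fun n => Im (digamma_term (z + 1) n)) =
                 Series (fun n => Im (digamma_term z n)) + Im (/ z))%R).
  { apply (Rplus_eq_reg_r (- Series (fun n => Im (digamma_term z n)))).
    ring_simplify.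
    rewrite <- Series_minus by (apply ex_im; auto).
    erewrite Series_ext. 2:{ intros n. change (Im ?a - Im ?b)%R with (Im (a - b)).
      rewrite diff_term. change (Im (?a - ?b)) with (Im a - Im b)%R. reflexivity. }
    apply is_series_unique. replace (Im (/ z)) with (Im (w 0%nat)).
    apply (telescope (fun n => Im (w n))). auto.
    unfold w. simpl (INR 0). f_equal. f_equal. Ceq. }
  unfold digamma. rewrite Sre, Sim. unfold Re, Im.
  generalize (/ z). intros [a b].
  generalize (Series (fun n : nat => fst (digamma_term z n))).
  generalize (Series (fun n : nat => snd (digamma_term z n))). intros.
  Ceq.
Qed.
Lemma RtoC_S (n : nat) : RtoC (INR (S n)) = RtoC (INR n) + 1.
Proof. rewrite S_INR. Ceq. Qed.

Lemma fdiff_iter_S (m : nat) (g : C -> C) (x : C) :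
  fdiff_iter (S m) g x = fdiff_iter m (fdiff g) x.
Proof.
  revert x. induction m; intros x. reflexivity.
  change (fdiff_iter (S (S m)) g x) with (fdiff_iter (S m) g (x + 1) - fdiff_iter (S m) g x).
  rewrite !IHm. reflexivity.
Qed.

Lemma fdiff_iter_local (n : nat) (f g : C -> C) (x : C) :
  (forall j, (j <= n)%nat -> f (x + RtoC (INR j)) = g (x + RtoC (INR j))) ->
  fdiff_iter n f x = fdiff_iter n g x.
Proof.
  revert x. induction n; intros x H.
  - simpl. specialize (H 0%nat (le_n 0)). simpl in H.
    replace (x + RtoC 0) with x in H by Ceq. exact H.
  - simpl. unfold fdiff. rewrite (IHn x), (IHn (x + 1)). reflexivity.
    + intros j Hj. replace (x + 1 + RtoC (INR j)) with (x + RtoC (INR (S j))).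
      apply H. lia. rewrite RtoC_S. ring.
    + intros j Hj. apply H. lia.
Qed.

Lemma fdiff_iter_plus (n : nat) (f g : C -> C) (x : C) :
  fdiff_iter n (fun y => f y + g y) x = fdiff_iter n f x + fdiff_iter n g x.
Proof. revert x. induction n; intros x. reflexivity. simpl. unfold fdiff. rewrite !IHn. ring. Qed.

Lemma fdiff_iter_scal (n : nat) (c : C) (f : C -> C) (x : C) :
  fdiff_iter n (fun y => c * f y) x = c * fdiff_iter n f x.
Proof. revert x. induction n; intros x. reflexivity. simpl. unfold fdiff. rewrite !IHn. ring. Qed.

Lemma fdiff_iter_shift (n : nat) (f : C -> C) (x : C) :
  fdiff_iter n (fun y => f (y + 1)) x = fdiff_iter n f (x + 1).
Proof. revert x. induction n; intros x. reflexivity. simpl. unfold fdiff. rewrite !IHn. reflexivity. Qed.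

Lemma fdiff_iter_ext (n : nat) (f g : C -> C) (x : C) :
  (forall y, f y = g y) -> fdiff_iter n f x = fdiff_iter n g x.
Proof. intros H. apply functional_extensionality in H. now subst. Qed.

Lemma unf n g x : fdiff_iter (S n) g x = fdiff_iter n g (x + 1) - fdiff_iter n g x.
Proof. reflexivity. Qed.

Lemma leibniz_lin (k : nat) (f : C -> C) (a y : C) :
  fdiff_iter (S k) (fun y => f y * (y + a)) y =
  fdiff_iter (S k) f y * (y + RtoC (INR (S k)) + a) + RtoC (INR (S k)) * fdiff_iter k f y.
Proof.
  revert y. induction k; intros y.
  - simpl. unfold fdiff. Ceq.
  - rewrite (unf (S k) (fun y => f y * (y + a))).
    rewrite !IHk.
    rewrite (unf (S k) f). rewrite (unf k f y).
    rewrite !RtoC_S. ring.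
Qed.

Inductive M : nat -> (C -> C) -> Prop :=
| M0 : M 0 (fun _ => 1)
| MS n f a : M n f -> M (S n) (fun y => f y * (y + a)).

Lemma M_ext n f g : M n f -> (forall y, f y = g y) -> M n g.
Proof. intros H E. apply functional_extensionality in E. now subst. Qed.

Lemma M_diff n f : M n f -> forall y, fdiff_iter n f y = RtoC (INR (fact n)).
Proof.
  induction 1; intros y. reflexivity.
  rewrite leibniz_lin. simpl (fdiff_iter (S n) f y). unfold fdiff. rewrite !IHM.
  rewrite fact_simpl, mult_INR, RtoC_mult. ring.
Qed.

Lemma M_mult n f m g : M n f -> M m g -> M (n + m) (fun y => f y * g y).
Proof.
  intros Hf Hg. induction Hg.
  - rewrite Nat.add_0_r. apply (M_ext _ f); auto. intros; ring.
  - rewrite Nat.add_succ_r. apply (M_ext _ (fun y => (f y * f0 y) * (y + a))).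
    constructor; auto. intros; ring.
Qed.

Lemma M_falling n b : M n (fun y => falling (y + b) n).
Proof.
  induction n. simpl. constructor.
  apply (M_ext _ (fun y => falling (y + b) n * (y + (b - RtoC (INR n))))).
  constructor; auto. intros; simpl. ring.
Qed.

Lemma falling_S_shift (z : C) (n : nat) : falling (z + 1) (S n) = (z + 1) * falling z n.
Proof.
  induction n. simpl. ring.
  change (falling (z + 1) (S (S n))) with (falling (z + 1) (S n) * (z + 1 - RtoC (INR (S n)))).
  rewrite IHn. change (falling z (S n)) with (falling z n * (z - RtoC (INR n))). rewrite RtoC_S. ring.
Qed.

Lemma falling_split (z : C) (a b : nat) :
  falling z (a + S b) = falling z a * (z - RtoC (INR a)) * falling (z - RtoC (INR a) - 1) b.
Proof.
  induction b.
  - rewrite Nat.add_1_r. simpl. ring.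
  - rewrite Nat.add_succ_r. simpl falling at 1. rewrite IHb. simpl.
    rewrite Nat.add_succ_r, RtoC_S, plus_INR, RtoC_plus. ring.
Qed.

Lemma fact_nz n : RtoC (INR (fact n)) <> 0.
Proof. apply RtoC_neq, INR_fact_neq_0. Qed.

Lemma INR_S_nz n : RtoC (INR (S n)) <> 0.
Proof. apply RtoC_neq. pose proof (pos_INR n). rewrite S_INR. lra. Qed.

Lemma fact_S_C n : RtoC (INR (fact (S n))) = RtoC (INR (S n)) * RtoC (INR (fact n)).
Proof. rewrite fact_simpl, mult_INR, RtoC_mult. reflexivity. Qed.

Lemma pascal (z : C) (m : nat) : gbinom (z + 1) (S m) - gbinom z (S m) = gbinom z m.
Proof.
  unfold gbinom. rewrite falling_S_shift. simpl (falling z (S m)).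
  rewrite fact_S_C. pose proof (fact_nz m). pose proof (INR_S_nz m).
  rewrite RtoC_S in *. field. split; auto.
Qed.

Lemma inv_C (r : R) : r <> 0%R -> RtoC (/ r) = / RtoC r.
Proof. intros H. rewrite RtoC_inv; auto. Qed.

Lemma alg_m1 (w d : C) (l : nat) : w + 1 <> 0 ->
  gbinom (w + 1) (S l) * (d + / (w + 1)) - gbinom w (S l) * d =
  gbinom w l * d + RtoC (/ INR (fact (S l))) * falling w l.
Proof.
  intros Hw. pose proof (pascal w l) as P.
  replace (gbinom (w + 1) (S l) * (d + / (w + 1)) - gbinom w (S l) * d)
    with ((gbinom (w + 1) (S l) - gbinom w (S l)) * d + gbinom (w + 1) (S l) / (w + 1)) by (field; auto).
  rewrite P. unfold gbinom at 2. rewrite falling_S_shift.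
  rewrite inv_C by apply INR_fact_neq_0. pose proof (fact_nz (S l)).
  field. split; auto.
Qed.

Lemma alg_p (y d : C) (q r : nat) : y <> 0 ->
  gbinom (y + RtoC (INR q) + 1) (S (q + r)) * (d + / y) - gbinom (y + RtoC (INR q)) (S (q + r)) * d =
  gbinom (y + RtoC (INR q)) (q + r) * (d + / y) +
  RtoC (/ INR (fact (S (q + r)))) * (falling (y + RtoC (INR q)) q * falling (y + RtoC (-1)) r).
Proof.
  intros Hy. pose proof (pascal (y + RtoC (INR q)) (q + r)) as P.
  replace (gbinom (y + RtoC (INR q) + 1) (S (q + r)) * (d + / y) - gbinom (y + RtoC (INR q)) (S (q + r)) * d)
    with ((gbinom (y + RtoC (INR q) + 1) (S (q + r)) - gbinom (y + RtoC (INR q)) (S (q + r))) * (d + / y)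
          + gbinom (y + RtoC (INR q)) (S (q + r)) / y) by (field; auto).
  rewrite P. unfold gbinom at 2.
  rewrite inv_C by apply INR_fact_neq_0. pose proof (fact_nz (S (q + r))).
  rewrite <- Nat.add_succ_r in *. rewrite falling_split.
  replace (y + RtoC (INR q) - RtoC (INR q) - 1) with (y + RtoC (-1)) by Ceq.
  replace (y + RtoC (INR q) - RtoC (INR q)) with y by ring.
  field. split; auto.
Qed.

Lemma fact_ratio (l : nat) :
  RtoC (/ INR (fact (S l))) * RtoC (INR (fact l)) = RtoC (/ INR (S l)).
Proof.
  rewrite fact_simpl, mult_INR. pose proof (INR_fact_neq_0 l).
  assert (INR (S l) <> 0%R) by (rewrite S_INR; pose proof (pos_INR l); lra).
  rewrite <- RtoC_mult. f_equal. field. split; auto.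
Qed.

Lemma main (l : nat) : forall (p : Z) (x : C),
  (-1 <= p <= Z.of_nat l - 1)%Z ->
  (forall k : nat, (k <= l)%nat -> ~ nonpos_int (x + RtoC (INR k))) ->
  fdiff_iter l (fun y => gbinom (y + RtoC (IZR p)) l * digamma y) x
  = RtoC (harmonic l) + digamma (x + RtoC (IZR p) + 1).
Proof.
  induction l; intros p x Hp H.
  - assert (p = (-1)%Z) by lia. subst. simpl fdiff_iter.
    replace (x + RtoC (IZR (-1)) + 1) with x by Ceq.
    unfold gbinom. simpl falling. simpl harmonic. simpl fact.
    Ceq.
  - rewrite fdiff_iter_S.
    assert (Hnz : forall j, (j <= S l)%nat -> x + RtoC (INR j) <> 0).
    { intros j Hj. pose proof (nz_of_nonpos _ (H j Hj) 0%nat) as N. simpl INR in N.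
      replace (x + RtoC (INR j) + RtoC 0) with (x + RtoC (INR j)) in N by Ceq. exact N. }
    destruct (Z.eq_dec p (-1)) as [->|Hp1].
    + rewrite (fdiff_iter_local l _ (fun y => gbinom (y + RtoC (IZR (-1))) l * digamma y +
          RtoC (/ INR (fact (S l))) * falling (y + RtoC (IZR (-1))) l) x).
      2: { intros j Hj. unfold fdiff.
        set (y := x + RtoC (INR j)).
        assert (Hy : ~ nonpos_int y) by (apply H; lia).
        assert (Ey : y = (y + RtoC (IZR (-1))) + 1) by Ceq.
        rewrite (digamma_succ y Hy).
        replace (y + 1 + RtoC (IZR (-1))) with ((y + RtoC (IZR (-1))) + 1) by ring.
        pose proof (alg_m1 (y + RtoC (IZR (-1))) (digamma y) l) as A.
        rewrite <- Ey in A |- *. apply A. apply Hnz. lia. }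
      rewrite fdiff_iter_plus, fdiff_iter_scal.
      rewrite (IHl (-1)%Z x) by (try lia; intros k Hk; apply H; lia).
      rewrite (M_diff _ _ (M_falling l (RtoC (IZR (-1))))).
      rewrite fact_ratio. change (harmonic (S l)) with (harmonic l + / INR (S l))%R.
      rewrite RtoC_plus. ring.
    + assert (Hq : exists q, p = Z.of_nat q) by (exists (Z.to_nat p); rewrite Z2Nat.id; lia).
      destruct Hq as [q ->].
      assert (Hr : exists r, l = (q + r)%nat) by (exists (l - q)%nat; lia).
      destruct Hr as [r ->].
      rewrite (fdiff_iter_local (q + r) _ (fun y =>
          (fun z => gbinom (z + RtoC (IZR (Z.of_nat q - 1))) (q + r) * digamma z) (y + 1) +
          RtoC (/ INR (fact (S (q + r)))) * (falling (y + RtoC (INR q)) q * falling (y + RtoC (-1)) r)) x).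
      2: { intros j Hj. unfold fdiff.
        set (y := x + RtoC (INR j)).
        assert (Hy : ~ nonpos_int y) by (apply H; lia).
        rewrite (digamma_succ y Hy).
        replace (y + 1 + RtoC (IZR (Z.of_nat q - 1))) with (y + RtoC (INR q))
          by (rewrite minus_IZR, <- INR_IZR_INZ; Ceq).
        rewrite <- INR_IZR_INZ.
        replace (y + 1 + RtoC (INR q)) with (y + RtoC (INR q) + 1) by ring.
        apply alg_p. replace y with (x + RtoC (INR j)) by reflexivity. apply Hnz. lia. }
      rewrite fdiff_iter_plus, fdiff_iter_scal.
      rewrite (fdiff_iter_shift (q + r) (fun z => gbinom (z + RtoC (IZR (Z.of_nat q - 1))) (q + r) * digamma z)).
      rewrite (IHl (Z.of_nat q - 1)%Z (x + 1)).
      2: lia.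
      2: { intros k Hk. replace (x + 1 + RtoC (INR k)) with (x + RtoC (INR (S k))) by (rewrite RtoC_S; ring).
           apply H. lia. }
      rewrite (M_diff _ _ (M_mult _ _ _ _ (M_falling q (RtoC (INR q))) (M_falling r (RtoC (-1))))).
      rewrite fact_ratio. change (harmonic (S (q + r))) with (harmonic (q + r) + / INR (S (q + r)))%R.
      rewrite RtoC_plus.
      replace (x + 1 + RtoC (IZR (Z.of_nat q - 1)) + 1) with (x + RtoC (IZR (Z.of_nat q)) + 1)
        by (rewrite minus_IZR; Ceq).
      ring.
Qed.

Theorem lemma3p1 (l : nat) (p : Z) (x : C) :
  (1 <= l)%nat ->
  (-1 <= p <= Z.of_nat l - 1)%Z ->
  (forall k : nat, (k <= l)%nat -> ~ nonpos_int (x + RtoC (INR k))) ->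
  fdiff_iter l (fun y => gbinom (y + RtoC (IZR p)) l * digamma y) x
  = RtoC (harmonic l) + digamma (x + RtoC (IZR p) + 1).
Proof.
  intros _. apply main.
Qed.
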